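(* Let $f\in V\hat{A}$. Let $s_0\in\mathrm{Sing}(f)$, and let $O=\{f^i(s_0):i\in\mathbb Z\}$ be its orbit. Suppose $s_0$ is the only singularity of $f$ lying in $O$, and write $s_i=f^i(s_0)$. (a) If $O$ is infinite, then $\mathrm{Sing}(f^n)\cap O=\{s_{-n+1},\dots,s_{-1},s_0\}$ for every $n\ge1$. In particular, $f$ has infinite order and $|\mathrm{Sing}(f^n)|\ge n$ for all $n\ge1$. (b) If $O$ is finite of cardinality $m$, then $\mathrm{Sing}(f^n)\cap O=\{s_{-n+1},\dots,s_0\}$ for $1\le n\le m$. In particular, $s_0$ is a singularity of $f^m$ that is fixed by $f^m$.
   Context: Let $\mathfrak C=\{0,1\}^{\mathbb N}$ be the Cantor set, with points labelled by numbers in $[0,1]$ via binary expansion. A dyadic $p\in(0,1)$ corresponds to two points: $p^-$ (binary expansion eventually $1$) and $p^+$ (binary expansion eventually $0$). The Belk–Hyde–Matucci group $V\hat{A}$ is the group of bijections $f$ of $\mathfrak C$ such that: - $f$ (drawn as a map on $[0,1]$) is piecewise linear with slopes powers of $2$ and pieces beginning and ending at points with dyadic coordinates, where breakpoints may accumulate only at finitely many points, called the singularities of $f$; - each singularity has the form $p^\pm$ with $p$ dyadic, and its image has the form $q^\pm$ with the same sign; - on a sufficiently small one-sided neighborhood of a singularity $p^\pm$ with $f(p^\pm)=q^\pm$, $f$ is continuous and satisfies $f\circ L_p=L_q\circ f$, where $L_r(x)=2(x-r)+r$. $\mathrm{Sing}(f)$ denotes the finite set of singularities of $f$. Products are written as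 $fg=g\circ f$. *)

(* Defs.v *)
From Stdlib Require Import Arith List.
Import ListNotations.

(** The Cantor set {0,1}^N : a point is its binary expansion. *)
Definition cantor := nat -> bool.

Definition prepend (w : list bool) (z : cantor) : cantor :=
  fun i => if i <? length w then nth i w false else z (i - length w).

Definition const_seq (c : bool) : cantor := fun _ => c.

Definition agree (n : nat) (x y : cantor) : Prop := forall i, i < n -> y i = x i.

Definition in_cone (w : list bool) (x : cantor) : Prop :=
  forall i, i < length w -> x i = nth i w false.

Definition cont_at (f : cantor -> cantor) (x : cantor) : Prop :=
  forall n, exists m, forall y, agree m x y -> agree n (f x) (f y).

(** f is "locally linear" at x: on some cone neighbourhood [x_0..x_{n-1}] of x,
    f is a prefix replacement  (x_0..x_{n-1}) . z  |->  v . z,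
    i.e. a single linear piece with slope a power of 2 and dyadic endpoints. *)
Definition loc_linear (f : cantor -> cantor) (x : cantor) : Prop :=
  exists (n : nat) (v : list bool),
    forall y, agree n x y -> f y = prepend v (fun i => y (i + n)).

(** Sing(f): the points at which breakpoints of f accumulate, i.e. at which
    f is not locally a single dyadic linear piece. *)
Definition Sing (f : cantor -> cantor) (x : cantor) : Prop := ~ loc_linear f x.

(** Condition at a singularity s: s = w . c^oo (i.e. s = p^+ if c = false,
    p^- if c = true, p dyadic), f(s) = v . c^oo (same sign), f is continuous
    on the one-sided neighbourhood [w] of s, and on the neighbourhood [w c]
    of s one has f o L_p = L_q o f, where L_p (w c z) = w z and
    L_q (v c z') = v z'. *)
Definition sing_ok (f : cantor -> cantor) (s : cantor) : Prop :=
  exists (w v : list bool) (c : bool),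
    s = prepend w (const_seq c) /\
    f s = prepend v (const_seq c) /\
    (forall x, in_cone w x -> cont_at f x) /\
    (forall z, exists z',
        f (prepend (w ++ [c]) z) = prepend (v ++ [c]) z' /\
        f (prepend w z) = prepend v z').

Definition in_VA (f : cantor -> cantor) : Prop :=
  (exists g : cantor -> cantor, (forall x, g (f x) = x) /\ (forall x, f (g x) = x)) /\
  (exists l : list cantor, forall x, Sing f x -> In x l) /\
  (forall s, Sing f s -> sing_ok f s).

(** The orbit O = { f^i(s0) : i in Z } (g = f^{-1}). *)
Definition in_orbit (f g : cantor -> cantor) (s0 x : cantor) : Prop :=
  exists k : nat, x = Nat.iter k f s0 \/ x = Nat.iter k g s0.

Definition orbit_infinite (f g : cantor -> cantor) (s0 : cantor) : Prop :=
  ~ exists l : list cantor, forall x, in_orbit f g s0 x -> In x l.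

Definition orbit_card (f g : cantor -> cantor) (s0 : cantor) (m : nat) : Prop :=
  exists l : list cantor, NoDup l /\ length l = m /\
    forall x, In x l <-> in_orbit f g s0 x.

(* Main.v *)
Require Import Defs.
From Stdlib Require Import Arith List Lia FunctionalExtensionality Classical.
Import ListNotations.

Lemma prepend_lt w z i : i < length w -> prepend w z i = nth i w false.
Proof. intro H. unfold prepend. destruct (Nat.ltb_spec i (length w)); [reflexivity|lia]. Qed.
Lemma prepend_ge w z i : length w <= i -> prepend w z i = z (i - length w).
Proof. intro H. unfold prepend. destruct (Nat.ltb_spec i (length w)); [lia|reflexivity]. Qed.

Lemma ll_ext F G x : (forall y, F y = G y) -> loc_linear F x -> loc_linear G x.
Proof. intros E [n [v H]]. exists n, v. intros y Hy. rewrite <- E. auto. Qed.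

Lemma deepen1 (f : cantor -> cantor) x n v :
  (forall y, agree n x y -> f y = prepend v (fun i => y (i + n))) ->
  forall y, agree (S n) x y -> f y = prepend (v ++ [x n]) (fun i => y (i + S n)).
Proof.
  intros H y Hy. rewrite H by (intros i Hi; apply Hy; lia).
  apply functional_extensionality; intro i.
  destruct (Nat.lt_ge_cases i (length v)).
  - rewrite !prepend_lt; [rewrite app_nth1; auto| |]; auto.
    rewrite length_app; simpl; lia.
  - destruct (Nat.eq_dec i (length v)).
    + subst. rewrite prepend_ge by lia. rewrite prepend_lt by (rewrite length_app; simpl; lia).
      rewrite app_nth2 by lia. rewrite !Nat.sub_diag. simpl. apply Hy. lia.
    + rewrite !prepend_ge by (try rewrite length_app; simpl; lia).
      rewrite length_app; simpl. f_equal. lia.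
Qed.

Lemma deepen (f : cantor -> cantor) x n v :
  (forall y, agree n x y -> f y = prepend v (fun i => y (i + n))) ->
  forall k, exists v', length v' = length v + k /\
     forall y, agree (n + k) x y -> f y = prepend v' (fun i => y (i + (n + k))).
Proof.
  intros H k. induction k.
  - exists v. rewrite !Nat.add_0_r. auto.
  - destruct IHk as [v' [L H']]. exists (v' ++ [x (n + k)]). split.
    + rewrite length_app; simpl; lia.
    + rewrite <- Nat.add_succ_comm. apply deepen1. auto.
Qed.

Lemma ll_comp (f h : cantor -> cantor) x :
  loc_linear f x -> loc_linear h (f x) -> loc_linear (fun y => h (f y)) x.
Proof.
  intros [n [v Hf]] [m [u Hh]].
  destruct (deepen f x n v Hf m) as [v' [L H']].
  exists (n + m), (u ++ skipn m v'). intros y Hy.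
  assert (Ag : agree m (f x) (f y)).
  { intros i Hi. rewrite (H' y Hy), (H' x (fun _ _ => eq_refl)).
    rewrite !prepend_lt by lia. reflexivity. }
  rewrite (Hh _ Ag). apply functional_extensionality; intro i.
  destruct (Nat.lt_ge_cases i (length u)).
  - rewrite !prepend_lt; [rewrite app_nth1; auto| |]; auto.
    rewrite length_app; lia.
  - rewrite prepend_ge by lia. rewrite (H' y Hy).
    destruct (Nat.lt_ge_cases (i - length u + m) (length v')).
    + rewrite prepend_lt by auto. rewrite prepend_lt by (rewrite length_app, length_skipn; lia).
      rewrite app_nth2 by lia. rewrite nth_skipn. f_equal. lia.
    + rewrite prepend_ge by auto. rewrite prepend_ge by (rewrite length_app, length_skipn; lia).
      rewrite length_app, length_skipn. f_equal. lia.
Qed.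

Lemma ll_inv (f g : cantor -> cantor) x :
  (forall x, g (f x) = x) -> (forall x, f (g x) = x) ->
  loc_linear f x -> loc_linear g (f x).
Proof.
  intros gf fg [n [v Hf]].
  exists (length v), (map x (seq 0 n)). intros z Hz.
  set (y := prepend (map x (seq 0 n)) (fun i => z (i + length v))).
  assert (Ay : agree n x y).
  { intros i Hi. unfold y. rewrite prepend_lt by (rewrite length_map, length_seq; lia).
    rewrite nth_indep with (d' := x 0) by (rewrite length_map, length_seq; lia).
    rewrite map_nth, seq_nth by lia. reflexivity. }
  assert (E : f y = z).
  { rewrite (Hf y Ay). apply functional_extensionality; intro i.
    destruct (Nat.lt_ge_cases i (length v)).
    - rewrite prepend_lt by auto. rewrite (Hz i H), (Hf x (fun _ _ => eq_refl)).
      rewrite prepend_lt; auto.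
    - rewrite prepend_ge by auto. unfold y. rewrite prepend_ge by (rewrite length_map, length_seq; lia).
      rewrite length_map, length_seq. f_equal. lia. }
  rewrite <- E, gf. reflexivity.
Qed.
Section S.
Variables (f g : cantor -> cantor) (s0 : cantor).
Hypotheses (gf : forall x, g (f x) = x) (fg : forall x, f (g x) = x).

Lemma gfi a z : Nat.iter a g (Nat.iter a f z) = z.
Proof. induction a; [reflexivity|]. rewrite (Nat.iter_succ_r a _ g). simpl (Nat.iter (S a) f z). rewrite gf. auto. Qed.
Lemma fgi a z : Nat.iter a f (Nat.iter a g z) = z.
Proof. induction a; [reflexivity|]. rewrite (Nat.iter_succ_r a _ f). simpl (Nat.iter (S a) g z). rewrite fg. auto. Qed.
Lemma fgi_ge a b z : b <= a -> Nat.iter a f (Nat.iter b g z) = Nat.iter (a - b) f z.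
Proof. intro H. transitivity (Nat.iter ((a-b)+b) f (Nat.iter b g z)); [f_equal; lia|]. rewrite Nat.iter_add, fgi; auto. Qed.

Lemma gfi_le a b z : a <= b -> Nat.iter a g (Nat.iter b f z) = Nat.iter (b - a) f z.
Proof. intro H. transitivity (Nat.iter a g (Nat.iter (a + (b-a)) f z)); [do 2 f_equal; lia|]. rewrite Nat.iter_add. apply gfi. Qed.
Lemma fgi_le a b z : a <= b -> Nat.iter a f (Nat.iter b g z) = Nat.iter (b - a) g z.
Proof. intro H. transitivity (Nat.iter a f (Nat.iter (a + (b-a)) g z)); [do 2 f_equal; lia|]. rewrite Nat.iter_add. apply fgi. Qed.

Lemma orb_f x : in_orbit f g s0 x -> in_orbit f g s0 (f x).
Proof.
  intros [k [->| ->]].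
  - exists (S k). left. reflexivity.
  - destruct k. + exists 1. left. reflexivity.
    + exists k. right. simpl. apply fg.
Qed.
Lemma orb_fi i x : in_orbit f g s0 x -> in_orbit f g s0 (Nat.iter i f x).
Proof. intro H; induction i; simpl; auto using orb_f. Qed.

Lemma ll_iter n x : (forall i, i < n -> loc_linear f (Nat.iter i f x)) -> loc_linear (Nat.iter n f) x.
Proof.
  induction n; intro H.
  - exists 0, []. intros y _. apply functional_extensionality; intro i.
    rewrite prepend_ge by (simpl; lia). simpl. f_equal. lia.
  - apply ll_ext with (F := fun y => f (Nat.iter n f y)); [reflexivity|].
    apply ll_comp; auto.
Qed.

Lemma ll_g y : loc_linear f (g y) -> loc_linear g y.
Proof. intro H. rewrite <- (fg y). apply ll_inv; auto. Qed.

Lemma ll_giter k y : (forall i, i < k -> loc_linear f (Nat.iter (S i) g y)) -> loc_linear (Nat.iter k g) y.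
Proof.
  induction k; intro H.
  - exists 0, []. intros z _. apply functional_extensionality; intro i.
    rewrite prepend_ge by (simpl; lia). simpl. f_equal. lia.
  - apply ll_ext with (F := fun z => g (Nat.iter k g z)); [reflexivity|].
    apply ll_comp; auto. apply ll_g. apply H. lia.
Qed.

Hypothesis Ss0 : Sing f s0.
Hypothesis uniq : forall x, Sing f x -> in_orbit f g s0 x -> x = s0.

Lemma ll_orbit x : in_orbit f g s0 x -> x <> s0 -> loc_linear f x.
Proof. intros O N. apply NNPP. intro L. apply N. apply uniq; auto. Qed.

Lemma core n : 1 <= n -> (forall k, 0 < k < n -> Nat.iter k g s0 <> s0) ->
  forall x, (Sing (Nat.iter n f) x /\ in_orbit f g s0 x) <->
        (exists j, j < n /\ x = Nat.iter j g s0).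
Proof.
  intros Hn Hk x. split.
  - intros [S O]. apply NNPP. intro NE. apply S. apply ll_iter.
    intros i Hi. apply ll_orbit; [apply orb_fi; auto|].
    intro E. apply NE. exists i. split; auto. rewrite <- E. symmetry. apply gfi.
  - intros [j [Hj ->]]. split; [|exists j; right; reflexivity].
    intro L. apply Ss0.
    assert (L1 : loc_linear (Nat.iter j g) s0).
    { apply ll_giter. intros i Hi. apply ll_orbit; [exists (S i); right; reflexivity|].
      apply Hk. lia. }
    assert (L2 : loc_linear (Nat.iter (n - j - 1) g) (Nat.iter n f (Nat.iter j g s0))).
    { rewrite fgi_ge by lia. apply ll_giter. intros i Hi.
      rewrite gfi_le by lia. apply ll_orbit; [exists (n - j - S i); left; reflexivity|].
      intro E. apply (Hk (n - j - S i)); [lia|].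
      rewrite <- E at 1. apply gfi. }
    apply (ll_ext (fun y => Nat.iter (n - j - 1) g (Nat.iter n f (Nat.iter j g y)))).
    + intro y. rewrite fgi_ge by lia. rewrite gfi_le by lia.
      replace (n - j - (n - j - 1)) with 1 by lia. reflexivity.
    + apply (ll_comp (fun y => Nat.iter n f (Nat.iter j g y))); auto.
      apply (ll_comp (Nat.iter j g) (Nat.iter n f)); auto.
Qed.
End S.

Lemma NoDup_map_seq (h : nat -> cantor) N : forall a,
  (forall i j, a <= i < a + N -> a <= j < a + N -> h i = h j -> i = j) ->
  NoDup (map h (seq a N)).
Proof.
  induction N; intros a H; simpl; constructor.
  - rewrite in_map_iff. intros [x [E I]]. rewrite in_seq in I.
    assert (x = a) by (apply H; auto; lia). lia.
  - apply IHN. intros i j Hi Hj. apply H; lia.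
Qed.

Section T.
Variables (f g : cantor -> cantor) (s0 : cantor).
Hypotheses (gf : forall x, g (f x) = x) (fg : forall x, f (g x) = x).

Lemma gq k : Nat.iter k g s0 = s0 -> forall q, Nat.iter (q * k) g s0 = s0.
Proof. intros Hk q. induction q; [reflexivity|]. simpl. rewrite Nat.iter_add, IHq. auto. Qed.

Lemma gmod k : 0 < k -> Nat.iter k g s0 = s0 -> forall a,
  In (Nat.iter a g s0) (map (fun r => Nat.iter r g s0) (seq 0 k)).
Proof.
  intros Hk0 Hk a. apply in_map_iff. exists (a mod k). split.
  - transitivity (Nat.iter (a mod k + (a / k) * k) g s0).
    + rewrite Nat.iter_add, gq; auto.
    + f_equal. pose proof (Nat.div_mod_eq a k). lia.
  - apply in_seq. pose proof (Nat.mod_upper_bound a k). lia.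
Qed.

Lemma fin_orbit k : 0 < k -> Nat.iter k g s0 = s0 -> forall x, in_orbit f g s0 x ->
  In x (map (fun r => Nat.iter r g s0) (seq 0 k)).
Proof.
  intros Hk0 Hk x [a [->| ->]]; [|apply gmod; auto].
  assert (E : Nat.iter a f s0 = Nat.iter (a * k - a) g s0).
  { rewrite <- (fgi f g fg a (Nat.iter (a * k - a) g s0)). f_equal.
    rewrite <- Nat.iter_add. replace (a + (a * k - a)) with (a * k) by nia. symmetry. apply gq; auto. }
  rewrite E. apply gmod; auto.
Qed.

Lemma dist i j : i < j -> Nat.iter i g s0 = Nat.iter j g s0 -> Nat.iter (j - i) g s0 = s0.
Proof.
  intros H E. rewrite <- (fgi_le f g fg i j) by lia. rewrite <- E. apply fgi. auto.
Qed.
End T.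

Theorem mainTheorem7 (f g : cantor -> cantor) (s0 : cantor) :
  in_VA f ->
  (forall x, g (f x) = x) -> (forall x, f (g x) = x) ->
  Sing f s0 ->
  (forall x, Sing f x -> in_orbit f g s0 x -> x = s0) ->
  (orbit_infinite f g s0 ->
     (forall n, 1 <= n -> forall x,
        (Sing (Nat.iter n f) x /\ in_orbit f g s0 x) <->
        (exists j, j < n /\ x = Nat.iter j g s0)) /\
     (forall n, 1 <= n -> Nat.iter n f <> (fun x => x)) /\
     (forall n, 1 <= n -> exists l : list cantor,
        length l = n /\ NoDup l /\ forall x, In x l -> Sing (Nat.iter n f) x))
  /\
  (forall m, orbit_card f g s0 m ->
     (forall n, 1 <= n <= m -> forall x,
        (Sing (Nat.iter n f) x /\ in_orbit f g s0 x) <->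
        (exists j, j < n /\ x = Nat.iter j g s0)) /\
     Sing (Nat.iter m f) s0 /\ Nat.iter m f s0 = s0).
Proof.
  intros _ gf fg Ss0 uniq. split.
  - intro Inf.
    assert (Hk : forall k, 0 < k -> Nat.iter k g s0 <> s0).
    { intros k Hk E. apply Inf. exists (map (fun r => Nat.iter r g s0) (seq 0 k)).
      apply fin_orbit; auto. }
    assert (C : forall n, 1 <= n -> forall x,
        (Sing (Nat.iter n f) x /\ in_orbit f g s0 x) <->
        (exists j, j < n /\ x = Nat.iter j g s0)).
    { intros n Hn. apply (core f g s0); auto. intros k Hk'. apply Hk. lia. }
    split; [exact C|split].
    + intros n Hn E. assert (S : Sing (Nat.iter n f) s0).
      { apply (C n Hn). exists 0. split; [lia|reflexivity]. }
      apply S. rewrite E. apply (ll_ext (Nat.iter 0 f)); [reflexivity|].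
      apply ll_iter. intros; lia.
    + intros n Hn. exists (map (fun r => Nat.iter r g s0) (seq 0 n)). split; [|split].
      * rewrite length_map, length_seq. reflexivity.
      * apply NoDup_map_seq. intros i j Hi Hj E.
        destruct (Nat.lt_total i j) as [L|[L|L]]; auto.
        -- exfalso. apply (Hk (j - i)); [lia|]. apply (dist f g s0 fg); auto.
        -- exfalso. apply (Hk (i - j)); [lia|]. apply (dist f g s0 fg); auto.
      * intros x Ix. apply in_map_iff in Ix. destruct Ix as [r [<- Ir]]. apply in_seq in Ir.
        apply (C n Hn). exists r. split; [lia|reflexivity].
  - intros m [l [ND [Len Hl]]].
    assert (Hm : 1 <= m).
    { destruct l; simpl in Len; [|lia]. exfalso. apply (proj2 (Hl s0)). exists 0. left. reflexivity. }
    assert (Hk : forall k, 0 < k < m -> Nat.iter k g s0 <> s0).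
    { intros k Hk E. pose proof (NoDup_incl_length ND (l' := map (fun r => Nat.iter r g s0) (seq 0 k))).
      rewrite length_map, length_seq in H. assert (m <= k); [|lia]. rewrite <- Len. apply H.
      intros x Ix. apply (fin_orbit f g s0) with (k:=k); try lia; auto. apply Hl; auto. }
    assert (C : forall n, 1 <= n <= m -> forall x,
        (Sing (Nat.iter n f) x /\ in_orbit f g s0 x) <->
        (exists j, j < n /\ x = Nat.iter j g s0)).
    { intros n Hn. apply (core f g s0); auto; [lia|]. intros k Hk'. apply Hk. lia. }
    split; [exact C|split].
    + apply (C m). lia. exists 0. split; [lia|reflexivity].
    + assert (G : Nat.iter m g s0 = s0).
      { apply NNPP. intro NE.
        assert (ND2 : NoDup (map (fun r => Nat.iter r g s0) (seq 0 (S m)))).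
        { apply NoDup_map_seq. intros i j Hi Hj E.
          destruct (Nat.lt_total i j) as [L|[L|L]]; auto; exfalso.
          - pose proof (dist f g s0 fg i j L E).
            destruct (Nat.eq_dec (j - i) m) as [D|D]; [rewrite D in H; auto|].
            apply (Hk (j - i)); [lia|auto].
          - symmetry in E. pose proof (dist f g s0 fg j i L E).
            destruct (Nat.eq_dec (i - j) m) as [D|D]; [rewrite D in H; auto|].
            apply (Hk (i - j)); [lia|auto]. }
        pose proof (NoDup_incl_length ND2 (l' := l)).
        rewrite length_map, length_seq in H. assert (S m <= m); [|lia]. rewrite <- Len at 2. apply H.
        intros x Ix. apply in_map_iff in Ix. destruct Ix as [r [<- _]]. apply Hl. exists r. right. reflexivity. }
      rewrite <- G at 1. apply fgi. auto.
Qed.
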